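(* Let $0<\varepsilon_0\le1$ and let $A,B,C$ be $(h_A,k_A)$-, $(h_B,k_B)$-, $(h_C,k_C)$-expansions on $(0,\varepsilon_0]$. With the operations on expansions defined in the context, the following hold as identities of expansions (equal parameters $h,k$, equal coefficients and equal remainders for the two sides): (i) $A+0=A$ where $0$ is the $(h_A,k_A)$-expansion with zero coefficients and zero remainder; $A\cdot1=A$ where $1$ is the $(0,k_A-h_A)$-expansion $1+0\varepsilon+\dots+0\varepsilon^{k_A-h_A}$ with zero remainder; $A+(-1)A=0$ (the $(h_A,k_A)$-expansion of $0$); and, if $A$ is pivotal, $A\cdot A^{-1}=1$ (the $(0,k_A-h_A)$-expansion of $1$), valid on an interval $(0,\varepsilon'_0]$ where $A(\varepsilon)\ne0$; (ii) $A+B=B+A$ and $(A+B)+C=A+(B+C)$; (iii) $A\cdot B=B\cdot A$ and $(A\cdot B)\cdot C=A\cdot(B\cdot C)$; (iv) $(A+B)\cdot C=A\cdot C+B\cdot C$.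
   Context: A $(h,k)$-expansion of a real function $A$ on $(0,\varepsilon_0]$: $A(\varepsilon)=\sum_{l=h}^ka_l\varepsilon^l+o_A(\varepsilon^k)$ with integers $h\le k$, real $a_l$, $o_A(\varepsilon^k)/\varepsilon^k\to0$; pivotal means $a_h\ne0$. Operations (with $\wedge$ = min): Scalar multiple $cA$: $(h_A,k_A)$-expansion with coefficients $ca_l$ and remainder $co_A$. Sum $A+B$: $(h_A\wedge h_B,\,k_A\wedge k_B)$-expansion with coefficients $a_l+b_l$ (missing coefficients below $h_A$ resp. $h_B$ taken as $0$) and remainder $\sum_{k<i\le k_A}a_i\varepsilon^i+\sum_{k<j\le k_B}b_j\varepsilon^j+o_A+o_B$ where $k=k_A\wedge k_B$. Product $A\cdot B$: $(h_A+h_B,\,(k_A+h_B)\wedge(k_B+h_A))$-expansion with coefficients $c_{h_A+h_B+r}=\sum_{0\le i\le r}a_{h_A+i}b_{h_B+r-i}$ and remainder $\sum_{k<i+j}a_ib_j\varepsilon^{i+j}+\sum_ia_i\varepsilon^io_B+\sum_jb_j\varepsilon^jo_A+o_Ao_B$, $k$ being the new upper parameter. Reciprocal $B^{-1}$ of a pivotal $B$ (on an interval where $B\ne0$): $(-h_B,\,k_B-2h_B)$-expansion with $c_{-h_B}=b_{h_B}^{-1}$, $c_{-h_B+r}=-b_{h_B}^{-1}\sum_{1\le i\le r}b_{h_B+i}c_{-h_B+r-i}$, and remainder equal to $B^{-1}$ minus this polynomial. *)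

(* Defs.v *)
From HB Require Import structures.
From mathcomp Require Import all_boot all_order all_algebra.
From mathcomp Require Import all_classical all_reals topology normedtype.
Set Implicit Arguments. Unset Strict Implicit. Unset Printing Implicit Defensive.
Import Order.TTheory GRing.Theory Num.Theory.
Import numFieldNormedType.Exports.
Local Open Scope classical_set_scope.
Local Open Scope ring_scope.

(* An (h,k)-expansion: parameters h <= k, coefficients a_l (only l in [h,k]
   are meaningful), and remainder o_A. The represented function is
   A(x) = sum_{l=h}^k a_l x^l + o_A(x). *)
Record expansion (R : realType) := Expansion {
  eh : int; ek : int; ecoef : int -> R; erem : R -> R }.

Section Exp.
Variable R : realType.

Definition psum (h k : int) (a : int -> R) (x : R) : R :=
  \sum_(0 <= i < (absz (k - h)).+1) a (h + i%:Z) * x ^ (h + i%:Z).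

Definition tsum (m n : int) (a : int -> R) (x : R) : R :=
  \sum_(0 <= i < absz (n - m)) a (m + 1 + i%:Z) * x ^ (m + 1 + i%:Z).

Definition epoly (A : expansion R) (x : R) : R := psum (eh A) (ek A) (ecoef A) x.

Definition efun (A : expansion R) (x : R) : R := epoly A x + erem A x.

Definition is_expansion (A : expansion R) : Prop :=
  eh A <= ek A /\ (fun x => erem A x / x ^ ek A) @ 0^'+ --> (0 : R).

Definition pivotal (A : expansion R) : Prop := ecoef A (eh A) != 0.

Definition coefz (A : expansion R) (l : int) : R :=
  if eh A <= l then ecoef A l else 0.

Definition escale (c : R) (A : expansion R) : expansion R :=
  Expansion (eh A) (ek A) (fun l => c * ecoef A l) (fun x => c * erem A x).

Definition eadd (A B : expansion R) : expansion R :=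
  let k := Order.min (ek A) (ek B) in
  Expansion (Order.min (eh A) (eh B)) k
    (fun l => coefz A l + coefz B l)
    (fun x => tsum k (ek A) (coefz A) x + tsum k (ek B) (coefz B) x
              + erem A x + erem B x).

Definition emul (A B : expansion R) : expansion R :=
  let h := eh A + eh B in
  let k := Order.min (ek A + eh B) (ek B + eh A) in
  Expansion h k
    (fun l => \sum_(0 <= i < (absz (l - h)).+1)
                ecoef A (eh A + i%:Z) * ecoef B (l - eh A - i%:Z))
    (fun x =>
       (\sum_(0 <= i < (absz (ek A - eh A)).+1)
          \sum_(0 <= j < (absz (ek B - eh B)).+1 | k < eh A + i%:Z + (eh B + j%:Z))
            ecoef A (eh A + i%:Z) * ecoef B (eh B + j%:Z)
              * x ^ (eh A + i%:Z + (eh B + j%:Z)))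
       + epoly A x * erem B x + epoly B x * erem A x + erem A x * erem B x).

(* coefficients c_{-h}, ..., c_{-h+n} of the reciprocal, given b r = b_{h+r} *)
Fixpoint invseq (b : nat -> R) (n : nat) : seq R :=
  match n with
  | 0 => [:: (b 0%N)^-1]
  | n'.+1 => let s := invseq b n' in
      rcons s (- (b 0%N)^-1 * \sum_(1 <= i < n.+1) b i * nth 0 s (n - i)%N)
  end.

Definition invcoef (b : nat -> R) (r : nat) : R := nth 0 (invseq b r) r.

Definition einv (B : expansion R) : expansion R :=
  let h := - eh B in
  let k := ek B - 2 * eh B in
  let c := fun l : int => invcoef (fun r => ecoef B (eh B + r%:Z)) (absz (l - h)) in
  Expansion h k c (fun x => (efun B x)^-1 - psum h k c x).

Definition ezero (A : expansion R) : expansion R :=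
  Expansion (eh A) (ek A) (fun _ => 0) (fun _ => 0).

Definition eone (A : expansion R) : expansion R :=
  Expansion 0 (ek A - eh A) (fun l => if l == 0 then 1 else 0) (fun _ => 0).

Definition eqexp (e : R) (A B : expansion R) : Prop :=
  [/\ eh A = eh B, ek A = ek B,
      (forall l, eh A <= l <= ek A -> ecoef A l = ecoef B l) &
      (forall x, 0 < x <= e -> erem A x = erem B x)].

End Exp.

(* Main.v *)
Require Import Defs.
From HB Require Import structures.
From mathcomp Require Import all_boot all_order all_algebra.
From mathcomp Require Import all_classical all_reals topology normedtype.
From mathcomp Require Import zify ring lra.
Import Order.TTheory GRing.Theory Num.Theory.
Local Open Scope ring_scope.
Set Implicit Arguments. Unset Strict Implicit. Unset Printing Implicit Defensive.

Section Helpers.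
Variable R : realType.
Implicit Types (X Y : expansion R).

Lemma tri_ex n (F : nat -> nat -> R) :
  \sum_(0 <= l < n.+1) \sum_(0 <= i < l.+1) F l i =
  \sum_(0 <= i < n.+1) \sum_(i <= l < n.+1) F l i.
Proof.
transitivity (\sum_(0 <= l < n.+1) \sum_(0 <= i < n.+1)
                 (if (i <= l)%N then F l i else 0)).
  apply: eq_big_nat => l /andP[_ Hl].
  rewrite (big_nat_widen _ _ _ _ _ Hl) big_mkcond.
  by apply: eq_bigr => i _; rewrite ltnS.
rewrite exchange_big_nat; apply: eq_big_nat => i /andP[_ Hi].
rewrite (big_nat_widenl _ _ _ _ _ (leq0n i)) big_mkcond.
by apply: eq_bigr => l _.
Qed.

Definition conv (a b : nat -> R) (n : nat) :=
  \sum_(0 <= i < n.+1) a i * b (n - i)%N.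

Lemma convC a b n : conv a b n = conv b a n.
Proof.
rewrite /conv big_nat_rev; apply: eq_big_nat => i /andP[_ Hi].
rewrite add0n subSS mulrC; congr (b _ * a _); lia.
Qed.

Lemma convA a b c n : conv (conv a b) c n = conv a (conv b c) n.
Proof.
rewrite /conv.
under eq_bigr do rewrite big_distrl /=.
rewrite (tri_ex n (fun l i => a i * b (l - i)%N * c (n - l)%N)).
apply: eq_big_nat => i /andP[_ Hi].
rewrite big_distrr /= -{1}(add0n i) big_addn.
have -> : (n.+1 - i = (n - i).+1)%N by lia.
apply: eq_big_nat => j /andP[_ Hj].
rewrite mulrA; congr (_ * b _ * c _); lia.
Qed.

Lemma tri_sum nX nY N (T : nat -> nat -> R) : (N <= nX)%N -> (N <= nY)%N ->
  \sum_(0 <= i < nX.+1) \sum_(0 <= j < nY.+1 | (i + j <= N)%N) T i j =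
  \sum_(0 <= l < N.+1) \sum_(0 <= i < l.+1) T i (l - i)%N.
Proof.
move=> HX HY.
rewrite (tri_ex N (fun l i => T i (l - i)%N)).
rewrite (@big_cat_nat _ _ _ N.+1) //=.
rewrite [X in _ + X]big_nat_cond [X in _ + X]big1 ?addr0; last first.
  move=> i /andP[/andP[Hi _] _]; apply: big_pred0 => j; apply/negbTE; lia.
apply: eq_big_nat => i /andP[_ Hi].
rewrite -[in RHS](add0n i) big_addn.
have Hw : (N.+1 - i <= nY.+1)%N by lia.
rewrite (big_nat_widen _ _ _ _ _ Hw).
apply: eq_big => [j|j _]; first by apply/idP/idP; lia.
congr (T i _); lia.
Qed.

End Helpers.

Section Exp2.
Variable R : realType.
Implicit Types (X Y Z : expansion R) (f g : int -> R) (x : R) (h k m n p l hm K : int).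

Definition valid X := eh X <= ek X.
Definition cfs X (j : nat) := ecoef X (eh X + j%:Z).

Lemma big_from (a n : nat) (F : nat -> R) :
  \sum_(a <= i < n) F i = \sum_(0 <= i < n - a) F (i + a)%N.
Proof. by rewrite -{1}[a]add0n big_addn. Qed.

Lemma tsum_cat m n p f x : m <= n -> n <= p ->
  tsum m n f x + tsum n p f x = tsum m p f x.
Proof.
move=> Hmn Hnp; rewrite /tsum.
have -> : absz (p - m) = (absz (n - m) + absz (p - n))%N by lia.
rewrite [RHS](@big_cat_nat _ _ _ (absz (n - m))) //=.
congr (_ + _).
rewrite [RHS]big_from addKn; apply: eq_bigr => i _.
congr (f _ * x ^ _); lia.
by rewrite leq_addr.
Qed.

Lemma psum_tsum h k f x : h <= k -> psum h k f x = tsum (h - 1) k f x.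
Proof.
move=> H; rewrite /psum /tsum.
have -> : absz (k - (h - 1)%R)%R = (absz (k - h)%R).+1 by lia.
apply: eq_bigr => i _; congr (f _ * x ^ _); lia.
Qed.

Lemma psum_ext h k f g x : h <= k -> (forall l, h <= l <= k -> f l = g l) ->
  psum h k f x = psum h k g x.
Proof.
move=> H E; apply: eq_big_nat => i /andP[_ Hi]; rewrite E //.
apply/andP; split; lia.
Qed.

Lemma tsum_ext m n f g x : m <= n -> (forall l, m < l <= n -> f l = g l) ->
  tsum m n f x = tsum m n g x.
Proof.
move=> H E; apply: eq_big_nat => i /andP[_ Hi]; rewrite E //.
apply/andP; split; lia.
Qed.

Lemma tsum0 m n f x : m <= n -> (forall l, m < l <= n -> f l = 0) ->
  tsum m n f x = 0.
Proof.
move=> H E; rewrite (@tsum_ext m n f (fun=> 0)) //.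
by rewrite /tsum big1 // => i _; rewrite mul0r.
Qed.

Lemma psumD h k f g x :
  psum h k (fun l => f l + g l) x = psum h k f x + psum h k g x.
Proof. by rewrite /psum -big_split; apply: eq_bigr => i _; rewrite mulrDl. Qed.

Lemma psum_coefz_cat Z hm K x : valid Z -> hm <= eh Z -> hm <= K -> K <= ek Z ->
  psum hm K (coefz Z) x + tsum K (ek Z) (coefz Z) x = psum (eh Z) (ek Z) (ecoef Z) x.
Proof.
rewrite /valid => V H1 H2 H3.
rewrite psum_tsum // tsum_cat; [|lia|lia].
rewrite psum_tsum // -(@tsum_cat (hm - 1) (eh Z - 1) (ek Z)); [|lia|lia].
rewrite tsum0 ?add0r; last first.
- by move=> l Hl; rewrite /coefz ifF //; apply/negbTE; lia.
- lia.
apply: tsum_ext; first lia.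
by move=> l Hl; rewrite /coefz ifT //; lia.
Qed.

Lemma valid_add X Y : valid X -> valid Y -> valid (eadd X Y).
Proof. rewrite /valid /=; lia. Qed.

Lemma valid_mul X Y : valid X -> valid Y -> valid (emul X Y).
Proof. rewrite /valid /=; lia. Qed.

Lemma efun_add X Y x : valid X -> valid Y ->
  efun (eadd X Y) x = efun X x + efun Y x.
Proof.
rewrite /valid => HX HY; rewrite /efun /epoly /= psumD.
rewrite -(@psum_coefz_cat X (Order.min (eh X) (eh Y)) (Order.min (ek X) (ek Y)) x);
  rewrite /valid; try lia.
rewrite -(@psum_coefz_cat Y (Order.min (eh X) (eh Y)) (Order.min (ek X) (ek Y)) x);
  rewrite /valid; try lia.
ring.
Qed.

End Exp2.

Section Exp3.
Variable R : realType.
Implicit Types (X Y Z : expansion R) (f g : int -> R) (x : R) (h k m n p l hm K : int).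

Lemma tri_sum' nX nY N (P : nat -> nat -> bool) (T : nat -> nat -> R) :
  (N <= nX)%N -> (N <= nY)%N ->
  (forall i j, (i <= nX)%N -> (j <= nY)%N -> P i j = (i + j <= N)%N) ->
  \sum_(0 <= i < nX.+1) \sum_(0 <= j < nY.+1 | P i j) T i j =
  \sum_(0 <= l < N.+1) \sum_(0 <= i < l.+1) T i (l - i)%N.
Proof.
move=> HX HY HP; rewrite -(@tri_sum _ nX nY N) //; apply: eq_big_nat => i /andP[_ Hi].
rewrite big_nat_cond [RHS]big_nat_cond; apply: eq_bigl => j.
case Hj: (0 <= j < nY.+1)%N => //=; apply: HP; lia.
Qed.

Lemma cf_mul X Y l (n : nat) : l = eh X + eh Y + n%:Z ->
  ecoef (emul X Y) l = conv (cfs X) (cfs Y) n.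
Proof.
move=> ->; rewrite /= /conv /cfs.
have -> : absz (eh X + eh Y + n%:Z - (eh X + eh Y))%R = n by lia.
apply: eq_big_nat => i /andP[_ Hi]; congr (_ * ecoef Y _); lia.
Qed.

Lemma poly_mul X Y x : valid X -> valid Y -> x != 0 ->
  epoly (emul X Y) x +
  (\sum_(0 <= i < (absz (ek X - eh X)).+1)
     \sum_(0 <= j < (absz (ek Y - eh Y)).+1 |
           Order.min (ek X + eh Y) (ek Y + eh X) < eh X + i%:Z + (eh Y + j%:Z))
        ecoef X (eh X + i%:Z) * ecoef Y (eh Y + j%:Z)
          * x ^ (eh X + i%:Z + (eh Y + j%:Z)))
  = epoly X x * epoly Y x.
Proof.
rewrite /valid => HX HY x0.
rewrite /epoly /psum big_distrlr /=.
under [RHS]eq_bigr => i _ do under eq_bigr => j _ do rewrite mulrACA -expfzDr //.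
under [RHS]eq_bigr => i _ do rewrite (bigID (fun j =>
   Order.min (ek X + eh Y) (ek Y + eh X) < eh X + i%:Z + (eh Y + j%:Z))) /=.
rewrite big_split /= [RHS]addrC; congr (_ + _).
rewrite (@tri_sum' _ _ (absz (Order.min (ek X + eh Y) (ek Y + eh X) - (eh X + eh Y))%R));
  [| lia | lia | move=> i j Hi Hj; apply/idP/idP; lia].
apply: eq_big_nat => l /andP[_ Hl]; rewrite big_distrl /=.
have -> : absz (eh X + eh Y + l%:Z - (eh X + eh Y))%R = l by lia.
apply: eq_big_nat => i /andP[_ Hi]; congr (_ * ecoef Y _ * x ^ _); lia.
Qed.

End Exp3.

Section Exp4.
Variable R : realType.
Implicit Types (X Y Z : expansion R) (f g : int -> R) (x : R) (h k m n p l hm K : int).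

Lemma efun_mul X Y x : valid X -> valid Y -> x != 0 ->
  efun (emul X Y) x = efun X x * efun Y x.
Proof.
move=> HX HY x0.
have E := poly_mul HX HY x0.
rewrite /efun mulrDl !mulrDr -E /=.
rewrite /epoly /=.
ring.
Qed.

Lemma size_invseq (b : nat -> R) (n : nat) : size (invseq b n) = n.+1.
Proof. by elim: n => [|n IH] //=; rewrite size_rcons IH. Qed.

Lemma nth_invseq (b : nat -> R) (n r : nat) : (r <= n)%N ->
  nth 0 (invseq b n) r = invcoef b r.
Proof.
elim: n => [|n IH] Hr; first by move: Hr; rewrite leqn0 => /eqP ->.
rewrite /= nth_rcons size_invseq; case: ltnP => H; first exact: IH.
have -> : r = n.+1 by lia.
by rewrite eqxx /invcoef /= nth_rcons size_invseq ltnn eqxx.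
Qed.

Lemma invcoef_conv (b : nat -> R) (n : nat) : b 0%N != 0 ->
  conv b (invcoef b) n = (n == 0%N)%:R.
Proof.
move=> b0; case: n => [|n].
  by rewrite /conv big_nat1 /invcoef /= mulfV.
rewrite /conv big_nat_recl //= subn0.
rewrite {1}/invcoef /= nth_rcons size_invseq ltnn eqxx.
rewrite big_add1 /=.
have -> : \sum_(0 <= i < n.+1) b i.+1 * nth 0 (invseq b n) (n.+1 - i.+1)%N =
          \sum_(0 <= i < n.+1) b i.+1 * invcoef b (n.+1 - i.+1)%N.
  by apply: eq_big_nat => i /andP[_ Hi]; rewrite nth_invseq //; lia.
by rewrite mulrA mulrN mulfV // mulN1r addNr.
Qed.

Lemma coefz_add X Y l : coefz (eadd X Y) l = coefz X l + coefz Y l.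
Proof.
rewrite /coefz /= /coefz; case: ifP => H1; case: ifP => H2; case: ifP => H3;
  rewrite ?addr0 ?add0r //; exfalso; lia.
Qed.

Lemma conv_coefz X C hm (n : nat) : hm <= eh X ->
  conv (fun i => coefz X (hm + i%:Z)) (cfs C) n = coefz (emul X C) (hm + eh C + n%:Z).
Proof.
move=> H; rewrite [in RHS]/coefz [eh (emul X C)]/=.
case: leP => H2.
- rewrite (@cf_mul _ X C _ (n - absz (eh X - hm)%R)%N); last by lia.
  rewrite /conv (@big_cat_nat _ _ _ (absz (eh X - hm))) //=; last by lia.
  rewrite big_nat_cond big1 ?add0r; last first.
    move=> i /andP[/andP[_ Hi] _]; rewrite /coefz ifF ?mul0r //; apply/negbTE; lia.
  rewrite big_from.
  have -> : (n.+1 - absz (eh X - hm) = (n - absz (eh X - hm)).+1)%N by lia.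
  apply: eq_big_nat => i /andP[_ Hi]; rewrite /coefz ifT; last by lia.
  rewrite /cfs; congr (ecoef X _ * ecoef C _); lia.
- rewrite /conv big_nat_cond big1 // => i /andP[/andP[_ Hi] _].
  rewrite /coefz ifF ?mul0r //; apply/negbTE; lia.
Qed.

Lemma eqexp_of e X Y : valid X -> eh X = eh Y -> ek X = ek Y ->
  (forall l, eh X <= l <= ek X -> ecoef X l = ecoef Y l) ->
  (forall x, 0 < x <= e -> efun X x = efun Y x) -> eqexp e X Y.
Proof.
rewrite /valid => V H1 H2 H3 H4; split => // x Hx.
have P : epoly X x = epoly Y x.
  by rewrite /epoly -H1 -H2; apply: psum_ext.
move: (H4 x Hx); rewrite /efun P; exact: addrI.
Qed.

Lemma shift_int h (P : int -> Prop) : (forall n : nat, P (h + n%:Z)) ->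
  forall l, h <= l -> P l.
Proof. by move=> HP l Hl; have -> : l = h + (absz (l - h))%:Z by lia. Qed.

End Exp4.

Section Exp5.
Variable R : realType.
Implicit Types (X Y Z : expansion R) (f g : int -> R) (x : R) (h k m n p l hm K : int).

Lemma conv_ext (a a' b b' : nat -> R) (n : nat) :
  (forall i, a i = a' i) -> (forall i, b i = b' i) -> conv a b n = conv a' b' n.
Proof. by move=> Ha Hb; apply: eq_bigr => i _; rewrite Ha Hb. Qed.

Lemma convDl (a a' b : nat -> R) (n : nat) :
  conv (fun i => a i + a' i) b n = conv a b n + conv a' b n.
Proof. by rewrite /conv -big_split; apply: eq_bigr => i _; rewrite mulrDl. Qed.

Lemma efun_zero X x : efun (ezero X) x = 0.
Proof. by rewrite /efun /epoly /psum big1 ?addr0 // => i _; rewrite mul0r. Qed.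

Lemma efun_one X x : efun (eone X) x = 1.
Proof.
rewrite /efun /epoly /psum /= big_nat_recl // big1 ?addr0.
  by rewrite eqxx mul1r expr0z.
by move=> i _ /=; rewrite mul0r.
Qed.

Lemma efun_scale c X x : efun (escale c X) x = c * efun X x.
Proof.
rewrite /efun /epoly /psum /= mulrDr big_distrr /=; congr (_ + _).
by apply: eq_bigr => i _; rewrite mulrA.
Qed.

Lemma efun_inv X x : efun (einv X) x = (efun X x)^-1.
Proof. by rewrite /efun /epoly /= addrC subrK. Qed.

End Exp5.

Unset Implicit Arguments.
Set Strict Implicit.

Theorem lemma4 (R : realType) (eps0 : R) (A B C : expansion R) :
  0 < eps0 <= 1 ->
  is_expansion A -> is_expansion B -> is_expansion C ->
  (* (i) *)
  [/\ eqexp eps0 (eadd A (ezero A)) A,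
      eqexp eps0 (emul A (eone A)) A,
      eqexp eps0 (eadd A (escale (-1) A)) (ezero A) &
      (pivotal A -> forall eps0' : R, 0 < eps0' <= eps0 ->
         (forall x, 0 < x <= eps0' -> efun A x != 0) ->
         eqexp eps0' (emul A (einv A)) (eone A))] /\
  (* (ii) *)
  (eqexp eps0 (eadd A B) (eadd B A) /\
   eqexp eps0 (eadd (eadd A B) C) (eadd A (eadd B C))) /\
  (* (iii) *)
  (eqexp eps0 (emul A B) (emul B A) /\
   eqexp eps0 (emul (emul A B) C) (emul A (emul B C))) /\
  (* (iv) *)
  eqexp eps0 (emul (eadd A B) C) (eadd (emul A C) (emul B C)).
Proof.
move=> _ [VA _] [VB _] [VC _].
have VA' : valid A by []. have VB' : valid B by []. have VC' : valid C by [].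
have x0 : forall e x : R, 0 < x <= e -> x != 0.
  by move=> e x /andP[Hx _]; rewrite gt_eqF.
split; [split|split; [split|split; [split|]]].
-
  apply: eqexp_of => //; try (simpl; lia).
  + exact: valid_add.
  + move=> l /andP[Hl _]; simpl in Hl; rewrite /= /coefz /=; case: ifP => H; rewrite ?addr0 //.
    exfalso; lia.
  + by move=> x _; rewrite efun_add // efun_zero addr0.
-
  have V1 : valid (eone A) by rewrite /valid /=; lia.
  apply: eqexp_of => //; try (simpl; lia).
  + exact: valid_mul.
  + move=> l /andP[Hl _]; simpl in Hl; have Hl' : eh A <= l by lia.
    move: l Hl' {Hl}; apply: shift_int => n.
    rewrite (@cf_mul _ A (eone A) _ n) /=; last by lia.
    rewrite convC /conv big_nat_recl // big1 ?addr0.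
      by rewrite /cfs /= mul1r subn0.
    by move=> i _; rewrite /cfs /= mul0r.
  + by move=> x Hx; have xn := x0 _ _ Hx; rewrite efun_mul // efun_one mulr1.
-
  apply: eqexp_of => //; try (simpl; lia).
  + exact: valid_add.
  + move=> l /andP[Hl _]; simpl in Hl; rewrite /= /coefz /=; case: ifP => H.
      by rewrite mulN1r addrN.
    by rewrite addr0.
  + by move=> x _; rewrite efun_add // efun_scale efun_zero mulN1r addrN.
-
  move=> piv e' /andP[e'0 e'1] HF.
  have Vi : valid (einv A) by rewrite /valid /=; lia.
  apply: eqexp_of => //; try (simpl; lia).
  + exact: valid_mul.
  + move=> l /andP[Hl _]; simpl in Hl; have Hl' : 0 <= l by move: Hl => /=; lia.
    move: l Hl' {Hl}; apply: shift_int => n.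
    rewrite (@cf_mul _ A (einv A) _ n) /=; last by lia.
    rewrite (@conv_ext _ (cfs A) (cfs A) _ (invcoef (cfs A))) //; last first.
      by move=> j; rewrite /cfs /=; congr (invcoef _ _); lia.
    rewrite invcoef_conv; last by rewrite /cfs addr0.
    by case: n.
  + move=> x Hx; have xn := x0 _ _ Hx; rewrite efun_mul // efun_inv efun_one mulfV //.
    exact: HF.
-
  apply: eqexp_of => //; try (simpl; lia).
  + exact: valid_add.
  + by move=> l _ /=; rewrite addrC.
  + by move=> x _; rewrite !efun_add // addrC.
-
  apply: eqexp_of => //; try (simpl; lia).
  + by apply: valid_add => //; apply: valid_add.
  + by move=> l _ /=; rewrite !coefz_add addrA.
  + move=> x _; rewrite !efun_add ?addrA //; by apply: valid_add.
-
  apply: eqexp_of => //; try (simpl; lia).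
  + exact: valid_mul.
  + move=> l /andP[Hl _]; simpl in Hl; move: l Hl; apply: shift_int => n.
    rewrite (@cf_mul _ A B _ n) // (@cf_mul _ B A _ n); last by lia.
    exact: convC.
  + by move=> x Hx; have xn := x0 _ _ Hx; rewrite !efun_mul // mulrC.
-
  apply: eqexp_of => //; try (simpl; lia).
  + by apply: valid_mul => //; apply: valid_mul.
  + move=> l /andP[Hl _]; simpl in Hl; move: l Hl; apply: shift_int => n.
    rewrite (@cf_mul _ (emul A B) C _ n) // (@cf_mul _ A (emul B C) _ n) /=; last by lia.
    rewrite (@conv_ext _ _ (conv (cfs A) (cfs B)) _ (cfs C)) //; last first.
      by move=> i; rewrite /cfs (@cf_mul _ A B _ i).
    rewrite convA; apply: conv_ext => // j.
    by rewrite /cfs (@cf_mul _ B C _ j) //=; lia.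
  + move=> x Hx; have xn := x0 _ _ Hx; rewrite !efun_mul ?mulrA //; exact: valid_mul.
-
  apply: eqexp_of => //; try (simpl; lia).
  + by apply: valid_mul => //; apply: valid_add.
  + move=> l /andP[Hl _]; simpl in Hl; move: l Hl; apply: shift_int => n.
    rewrite (@cf_mul _ (eadd A B) C _ n) //.
    rewrite /cfs /= convDl.
    rewrite (@conv_coefz _ A C); last by lia.
    rewrite (@conv_coefz _ B C) //; lia.
  + move=> x Hx; have xn := x0 _ _ Hx; rewrite efun_mul //; last exact: valid_add.
    rewrite !efun_add //; try exact: valid_mul.
    by rewrite !efun_mul // mulrDl.
Qed.
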